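(* Assume $V=W$ is a Hilbert space, $\mathcal{A}$ is coercive with constant $\alpha>0$ (i.e. $\alpha\|\phi\|_W^2\le\mathcal{A}(\phi,\phi)$ for all $\phi\in W$), and $W_\theta\cup S_\theta\subseteq V_\eta$. Let $\sigma^*:=\inf_{w'_\theta\in W_\theta}\|u-w'_\theta\|_{op,\eta}$. If $\varepsilon\ge0$ and $w_\theta\in W_\theta$ satisfy $\|u-w_\theta\|_{op,\eta}\le\sigma^*+\varepsilon$, then $$\|u-w_\theta\|_W\le\Big(1+\frac{4M}{\alpha}\Big)\inf_{w'_\theta\in W_\theta}\|u-w'_\theta\|_W+\frac{\varepsilon}{\alpha}.$$ In particular, for any minimizing sequence $(w^n_\theta)\subset W_\theta$ (i.e. $\|u-w^n_\theta\|_{op,\eta}\to\sigma^*$) and any $\varepsilon>0$ there is $k$ with $\|u-w^k_\theta\|_W\le(1+4M/\alpha)\inf_{w'_\theta\in W_\theta}\|u-w'_\theta\|_W+\varepsilon/\alpha$.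
   Context: $W=V$ is a separable real Hilbert space. $\mathcal{A}:W\times W\to\mathbb{R}$ is a bilinear form with $\mathcal{A}(w,v)\le M\|w\|_W\|v\|_W$, $\mathcal{F}:W\to\mathbb{R}$ is bounded linear, and $u\in W$ is the unique solution of $\mathcal{A}(u,v)=\mathcal{F}(v)$ for all $v\in W$. $W_\theta,V_\eta\subseteq W$ are arbitrary subsets, $V_\eta$ containing an element of nonzero norm. For $w\in W$, $\|w\|_{op,\eta}:=\sup_{v_\eta\in V_\eta,\ \|v_\eta\|_W\neq0}\mathcal{A}(w,v_\eta)/\|v_\eta\|_W$. $S_\theta:=\{w_1-w_2:\ w_1,w_2\in W_\theta\}$. *)

(* Defs.v *)
From HB Require Import structures.
From mathcomp Require Import all_boot all_order all_algebra.
From mathcomp Require Import all_classical all_reals all_analysis.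
Set Implicit Arguments. Unset Strict Implicit. Unset Printing Implicit Defensive.
Import Order.TTheory GRing.Theory Num.Theory.
Import numFieldNormedType.Exports.
Local Open Scope classical_set_scope.
Local Open Scope ring_scope.

(* A real Hilbert space: a complete normed space whose norm comes from a
   symmetric bilinear inner product; we also require separability. *)
Definition is_inner_product (R : realType) (V : normedModType R)
    (ip : V -> V -> R) : Prop :=
  [/\ (forall (a : R) (x y z : V), ip (a *: x + y) z = a * ip x z + ip y z),
      (forall x y : V, ip x y = ip y x) &
      (forall x : V, `|x| = Num.sqrt (ip x x))].

Definition separable_space (T : topologicalType) : Prop :=
  exists D : set T, countable D /\ closure D = setT.

Definition bilinear_form (R : realType) (V : normedModType R)
    (A : V -> V -> R) : Prop :=
  (forall (a : R) (x y z : V), A (a *: x + y) z = a * A x z + A y z) /\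
  (forall (a : R) (x y z : V), A z (a *: x + y) = a * A z x + A z y).

Definition bounded_linear_functional (R : realType) (V : normedModType R)
    (F : V -> R) : Prop :=
  (forall (a : R) (x y : V), F (a *: x + y) = a * F x + F y) /\
  exists C : R, forall x : V, `|F x| <= C * `|x|.

Definition opnorm (R : realType) (V : normedModType R)
    (A : V -> V -> R) (Veta : set V) (w : V) : R :=
  sup [set A w v / `|v| | v in [set v | Veta v /\ `|v| != 0]].

Definition diffset (R : realType) (V : normedModType R) (Wt : set V) : set V :=
  [set x | exists w1 w2, Wt w1 /\ Wt w2 /\ x = w1 - w2].

(* Main.v *)
Require Import Defs.
From HB Require Import structures.
From mathcomp Require Import all_boot all_order all_algebra.
From mathcomp Require Import all_classical all_reals all_analysis.
Import Order.TTheory GRing.Theory Num.Theory.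
Import numFieldNormedType.Exports.
Local Open Scope classical_set_scope.
Local Open Scope ring_scope.
Lemma A_subl (R : realType) (V : normedModType R) (A : V -> V -> R) :
  bilinear_form A -> forall x y z, A (x - y) z = A x z - A y z.
Proof.
move=> [hl _] x y z.
have -> : x - y = (-1) *: y + x by rewrite scaleN1r addrC.
by rewrite hl mulN1r addrC.
Qed.

Lemma A_oppr (R : realType) (V : normedModType R) (A : V -> V -> R) :
  bilinear_form A -> forall x z, A x (- z) = - A x z.
Proof.
move=> [_ hr] x z.
have h0 : A x 0 = 0.
  have := hr 1 0 0 x; rewrite scale1r addr0 mul1r => h.
  by apply: (@addrI _ (A x 0)); rewrite addr0 -h.
have -> : - z = (-1) *: z + 0 by rewrite scaleN1r addr0.
by rewrite hr h0 addr0 mulN1r.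
Qed.

Section S.
Variables (R : realType) (V : normedModType R) (A : V -> V -> R) (M : R)
  (Veta : set V).
Hypothesis hA : bilinear_form A.
Hypothesis hM : forall w v : V, A w v <= M * `|w| * `|v|.
Hypothesis hne : exists v : V, Veta v /\ `|v| != 0.

Let E x := [set A x v / `|v| | v in [set v | Veta v /\ `|v| != 0]].

Lemma E_ub x : has_ubound (E x).
Proof.
exists (M * `|x|) => r [v [_ nv] <-].
rewrite ler_pdivrMr; first exact: hM.
by rewrite lt_neqAle eq_sym nv normr_ge0.
Qed.

Lemma opnorm_ge x v : Veta v -> `|v| != 0 -> A x v / `|v| <= opnorm A Veta x.
Proof.
move=> hv nv; apply: (ub_le_sup (E_ub x)); by exists v.
Qed.

Lemma opnorm_le x : opnorm A Veta x <= M * `|x|.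
Proof.
case: hne => v0 [hv0 nv0].
apply: ge_sup; first by exists (A x v0 / `|v0|); exists v0.
move=> r [v [_ nv] <-].
rewrite ler_pdivrMr; first exact: hM.
by rewrite lt_neqAle eq_sym nv normr_ge0.
Qed.

Lemma opnorm_lb x : - (M * `|x|) <= opnorm A Veta x.
Proof.
case: hne => v0 [hv0 nv0].
have h := opnorm_ge x v0 hv0 nv0.
apply: le_trans h.
have p : 0 < `|v0| by rewrite lt_neqAle eq_sym nv0 normr_ge0.
rewrite ler_pdivlMr // mulNr lerNl -A_oppr //.
by rewrite -(normrN v0); apply: hM.
Qed.
End S.
Arguments opnorm_ge {R V A M Veta}.
Arguments opnorm_le {R V A M Veta}.
From mathcomp Require Import lra.

Theorem mainTheorem3 (R : realType) (V : completeNormedModType R)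
  (ip : V -> V -> R) (A : V -> V -> R) (F : V -> R) (M alpha : R) (u : V)
  (Wt Veta : set V) :
  is_inner_product ip -> separable_space V ->
  bilinear_form A ->
  (forall w v : V, A w v <= M * `|w| * `|v|) ->
  bounded_linear_functional F ->
  (forall v : V, A u v = F v) ->
  (forall w : V, (forall v : V, A w v = F v) -> w = u) ->
  (exists v : V, Veta v /\ `|v| != 0) ->
  0 < alpha ->
  (forall phi : V, alpha * `|phi| ^+ 2 <= A phi phi) ->
  Wt `|` diffset Wt `<=` Veta ->
  let sigma := inf [set opnorm A Veta (u - w') | w' in Wt] in
  let best := inf [set `|u - w'| | w' in Wt] in
  (forall (eps : R) (w : V), 0 <= eps -> Wt w ->
     opnorm A Veta (u - w) <= sigma + eps ->
     `|u - w| <= (1 + 4 * M / alpha) * best + eps / alpha) /\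
  (forall wn : nat -> V, (forall n, Wt (wn n)) ->
     (fun n => opnorm A Veta (u - wn n)) @ \oo --> sigma ->
     forall eps : R, 0 < eps ->
     exists k : nat, `|u - wn k| <= (1 + 4 * M / alpha) * best + eps / alpha).
Proof.
move=> _ _ hA hM _ _ _ hne hal hco hsub sigma best.
have M0 : 0 <= M.
  case: hne => v0 [_ nv0].
  have p : 0 < `|v0| by rewrite lt_neqAle eq_sym nv0 normr_ge0.
  have := le_trans (hco v0) (hM v0 v0).
  rewrite expr2 mulrA => h.
  have : alpha * `|v0| <= M * `|v0| by rewrite -(ler_pM2r p).
  by rewrite ler_pM2r // => /(le_trans (ltW hal)).
have sigle : forall w', Wt w' -> sigma <= M * `|u - w'|.
  move=> w' hw'.
  have [hl|hnl] := pselect (has_lbound [set opnorm A Veta (u - w') | w' in Wt]).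
    apply: le_trans (opnorm_le hM hne (u - w')).
    by apply: (ge_inf hl); exists w'.
  rewrite /sigma inf_out; first by rewrite mulr_ge0.
  by case.
have part1 : forall (eps : R) (w : V), 0 <= eps -> Wt w ->
     opnorm A Veta (u - w) <= sigma + eps ->
     `|u - w| <= (1 + 4 * M / alpha) * best + eps / alpha.
  move=> eps w heps hw hle.
  have key : forall w', Wt w' -> alpha * `|w' - w| <= 2 * M * `|u - w'| + eps.
    move=> w' hw'.
    have [e0|nz] := eqVneq (w' - w) 0.
      by rewrite e0 normr0 mulr0; apply: addr_ge0 => //; rewrite !mulr_ge0.
    set v := w' - w.
    have nv : `|v| != 0 by rewrite normr_eq0.
    have p : 0 < `|v| by rewrite lt_neqAle eq_sym nv normr_ge0.
    have hv : Veta v by apply: hsub; right; exists w', w.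
    have ev : v = (u - w) - (u - w') by rewrite /v opprB [RHS]addrC addrA subrK.
    have h1 := hco v.
    rewrite {2}ev A_subl // in h1.
    have h2 : A (u - w) v <= (M * `|u - w'| + eps) * `|v|.
      rewrite -ler_pdivrMr //.
      apply: le_trans (opnorm_ge hM (u - w) v hv nv) _.
      apply: le_trans hle _.
      by rewrite lerD2r; apply: sigle.
    have h3 : - A (u - w') v <= M * `|u - w'| * `|v|.
      by rewrite -A_oppr // -(normrN v); apply: hM.
    rewrite -(ler_pM2r p).
    rewrite expr2 mulrA in h1.
    lra.
  have c0 : 0 < 1 + 4 * M / alpha.
    have : 0 <= 4 * M / alpha by rewrite !mulr_ge0 // invr_ge0 ltW.
    lra.
  suff : (`|u - w| - eps / alpha) / (1 + 4 * M / alpha) <= best.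
    by rewrite ler_pdivrMr // => h; lra.
  apply: lb_le_inf; first by exists `|u - w|, w.
  move=> y [w' hw' <-].
  rewrite ler_pdivrMr // lerBlDr.
  have hk := key w' hw'.
  have tri : `|u - w| <= `|u - w'| + `|w' - w|.
    have -> : u - w = (u - w') + (w' - w) by rewrite addrA subrK.
    exact: ler_normD.
  have hd : `|w' - w| <= (2 * M * `|u - w'| + eps) / alpha.
    by rewrite ler_pdivlMr // mulrC.
  have hq : 0 <= `|u - w'| by [].
  have t : 0 <= M * `|u - w'| * alpha^-1 by rewrite !mulr_ge0 // invr_ge0 ltW.
  lra.
split; first exact: part1.
move=> wn hwn hcv eps heps.
have := cvgr_dist_lt _ _ hcv eps heps.
case => N _ hN.
exists N; apply: (part1 eps) => //; first exact: ltW.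
have := hN N (leqnn N).
rewrite /= => h.
have : opnorm A Veta (u - wn N) - sigma <= `|sigma - opnorm A Veta (u - wn N)|.
  by rewrite distrC ler_norm.
lra.
Qed.
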